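(* Let $r$ be a tensor rank function. Then for every $\mathscr X\in\mathcal T$, $r(\mathscr X)=0$ if and only if $\mathscr X=\mathbf 0$.
   Context: $\mathcal T$ is the collection of all real tensors. A rank-one tensor is one of the form $x_{i_1\cdots i_N}=a^{(1)}_{i_1}\cdots a^{(N)}_{i_N}$ with all $\mathbf a^{(n)}$ nonzero vectors. $\mathscr I_{M,N}$ is the order-$N$ tensor of size $M\times\cdots\times M$ with $1$ in positions $(i,\dots,i)$ and $0$ elsewhere. The mode-$n$ product of $\mathscr X\in\mathbb R^{I_1\times\cdots\times I_N}$ with $\mathbf A\in\mathbb R^{J\times I_n}$ is $\mathscr X\times_n\mathbf A$ with entries $\sum_{i_n=1}^{I_n}x_{i_1\cdots i_N}a_{j i_n}$ at position $(i_1,\dots,i_{n-1},j,i_{n+1},\dots,i_N)$. A tensor rank function is a function $r:\mathcal T\to\mathbb N\cup\{0\}$ such that: (TR1) $r(\mathscr X)=1$ iff $\mathscr X$ is rank-one; (TR2) $r(\mathscr I_{M,N})=M$ whenever $N\ge2$; (TR3) for a matrix $\mathscr X\in\mathbb R^{I_1\times I_2}$, $r(\mathscr X)$ is its matrix rank; (TR4) if $\mathscr X\in\mathbb R^{I_1\times\cdots\times I_N}$ and $\mathscr X'$ is the corresponding tensor in $\mathbb R^{I_1\times\cdots\times I_N\times1}$, then $r(\mathscr X)=r(\mathscr X')$; (TR5) for $\pi\in S_N$, the tensor $\mathscr Y$ with $y_{i_1\cdots i_N}=x_{i_{\pi(1)}\cdots i_{\pi(N)}}$ satisfies $r(\mathscr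 Y)=r(\mathscr X)$; (TR6) $r(\mathscr X\times_n\mathbf A)\le r(\mathscr X)$ for all $\mathscr X\in\mathbb R^{I_1\times\cdots\times I_N}$, $n$, and $\mathbf A\in\mathbb R^{J\times I_n}$. *)

(* Defs.v *)
From HB Require Import structures.
From mathcomp Require Import all_boot all_order all_algebra all_fingroup.
From mathcomp Require Import reals.
Set Implicit Arguments. Unset Strict Implicit. Unset Printing Implicit Defensive.
Import Order.TTheory GRing.Theory Num.Theory.
Local Open Scope ring_scope.

(* A tensor is given by its size list [tdim] (of length N >= 1) and its
   entries [tval], indexed by lists of (0-based) indices; multi-indices i
   with i_k < I_k for all k (predicate [inb]) are the genuine positions,
   and [tval] is required to vanish elsewhere (so that tensors with the
   same sizes and the same entries are equal). *)

Definition inb (d i : seq nat) : bool := all2 (fun a b => (a < b)%N) i d.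

Section Tensors.
Variable R : realType.

Record tensor := Tensor {
  tdim : seq nat;
  tdim_gt0 : (0 < size tdim)%N;
  tval : seq nat -> R;
  tval_out : forall i, ~~ inb tdim i -> tval i = 0 }.

Lemma mkT_out (d : seq nat) (f : seq nat -> R) i :
  ~~ inb d i -> (if inb d i then f i else 0) = 0.
Proof. by move/negbTE=> ->. Qed.

Definition mkT (d : seq nat) (h : (0 < size d)%N) (f : seq nat -> R) : tensor :=
  @Tensor d h (fun i => if inb d i then f i else 0) (@mkT_out d f).

Definition zeroT (X : tensor) : tensor := mkT (tdim_gt0 X) (fun _ => 0).

Definition rank_one (X : tensor) : Prop :=
  exists a : nat -> nat -> R,
    (forall k, (k < size (tdim X))%N ->
       exists2 j, (j < nth 0%N (tdim X) k)%N & a k j != 0) /\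
    (forall i, inb (tdim X) i ->
       tval X i = \prod_(k < size (tdim X)) a k (nth 0%N i k)).

(* I_{M,N} with N = n.+2 >= 2 *)
Lemma size_nseq_gt0 (n M : nat) : (0 < size (nseq n.+2 M))%N.
Proof. by rewrite size_nseq. Qed.

Definition idT (M n : nat) : tensor :=
  mkT (size_nseq_gt0 n M)
      (fun i => if all (fun x => x == head 0%N i) i then 1 else 0).

Definition mxT (m n : nat) (A : 'M[R]_(m, n)) : tensor :=
  @mkT [:: m; n] isT
    (fun i => match insub (nth 0%N i 0) : option 'I_m,
                    insub (nth 0%N i 1) : option 'I_n with
              | Some a, Some b => A a b
              | _, _ => 0 end).

Lemma size_rcons_gt0 (d : seq nat) (x : nat) : (0 < size (rcons d x))%N.
Proof. by rewrite size_rcons. Qed.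

Definition extT (X : tensor) : tensor :=
  mkT (size_rcons_gt0 (tdim X) 1)
      (fun i => tval X (take (size (tdim X)) i)).

(* y_{i_1..i_N} = x_{i_{pi(1)} .. i_{pi(N)}}; the k-th index of X is the
   pi(k)-th index of Y, so Y has size I_{pi^-1(1)} x ... x I_{pi^-1(N)} *)
Lemma size_perm_gt0 (X : tensor) (s : 'S_(size (tdim X))) :
  (0 < size [seq nth 0%N (tdim X) (s^-1%g j) | j <- enum 'I_(size (tdim X))])%N.
Proof. by rewrite size_map size_enum_ord tdim_gt0. Qed.

Definition permT (X : tensor) (s : 'S_(size (tdim X))) : tensor :=
  mkT (size_perm_gt0 s)
      (fun i => tval X [seq nth 0%N i (s k) | k <- enum 'I_(size (tdim X))]).

(* mode-n product X x_n A, A in R^{J x I_n} (n is a 0-based mode index) *)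
Lemma size_set_nth_gt0 (X : tensor) (n J : nat) :
  (0 < size (set_nth 0%N (tdim X) n J))%N.
Proof. by rewrite size_set_nth leq_max. Qed.

Definition modeT (X : tensor) (n J : nat) (A : 'M[R]_(J, nth 0%N (tdim X) n)) : tensor :=
  mkT (size_set_nth_gt0 X n J)
      (fun i => \sum_(t < nth 0%N (tdim X) n)
                  tval X (set_nth 0%N i n t) *
                  match insub (nth 0%N i n) : option 'I_J with
                  | Some j => A j t | None => 0 end).

Definition is_tensor_rank_fn (r : tensor -> nat) : Prop :=
  (forall X, r X = 1%N <-> rank_one X) /\
  (forall M n, r (idT M n) = M) /\
  (forall m n (A : 'M[R]_(m, n)), r (mxT A) = \rank A) /\
  (forall X, r X = r (extT X)) /\
  (forall X (s : 'S_(size (tdim X))), r (permT s) = r X) /\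
  (forall X (n : 'I_(size (tdim X))) J
               (A : 'M[R]_(J, nth 0%N (tdim X) n)), (r (modeT A) <= r X)%N).

End Tensors.

(* Main.v *)
Require Import Defs.
From mathcomp Require Import all_boot all_order all_algebra all_fingroup.
From mathcomp Require Import reals.
From Stdlib Require Import Classical ProofIrrelevance FunctionalExtensionality.
Require Import Defs.
Set Implicit Arguments. Unset Strict Implicit. Unset Printing Implicit Defensive.
Import Order.TTheory GRing.Theory Num.Theory.
Local Open Scope ring_scope.

Lemma inbE d i : inb d i <-> size i = size d /\
  (forall j, (j < size d)%N -> (nth 0 i j < nth 0 d j)%N).
Proof.
elim: d i => [|x d IH] [|y i] /=.
- by split=> // -[].
- by split=> // -[].
- by split=> // -[].
- rewrite /inb /=; split.
  + move/andP=> [h1 /IH [h2 h3]]; split; first by rewrite h2.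
    by case=> [|j] //= ?; apply: h3.
  + case=> [[hs] h]; apply/andP; split; first exact: (h 0%N).
    by apply/IH; split=> // j hj; exact: (h j.+1 hj).
Qed.

Section S.
Variable R : realType.

Lemma tensor_ext (X Y : tensor R) : tdim X = tdim Y -> tval X =1 tval Y -> X = Y.
Proof.
case: X => d1 h1 f1 o1; case: Y => d2 h2 f2 o2 /= Ed Ef; subst d2.
have Ef' : f1 = f2 by apply: functional_extensionality.
subst f2.
have -> : h1 = h2 by apply: proof_irrelevance.
have -> : o1 = o2 by apply: proof_irrelevance.
done.
Qed.

Definition iszero (X : tensor R) := forall i, tval X i = 0.

Variable r : tensor R -> nat.
Hypothesis Hr : is_tensor_rank_fn r.

Lemma zero_step (X Y : tensor R) n J : iszero X -> iszero Y ->
  (n < size (tdim X))%N -> tdim Y = set_nth 0%N (tdim X) n J -> (r Y <= r X)%N.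
Proof.
move=> hX hY hn hd.
have -> : Y = modeT (n := Ordinal hn) (0 : 'M[R]_(J, nth 0%N (tdim X) n)).
  apply: tensor_ext => //= i; rewrite hY; case: ifP => // _.
  by rewrite big1 // => t _; rewrite hX mul0r.
by case: Hr => _ [_ [_ [_ [_ H6]]]]; apply: H6.
Qed.

Lemma zero_le (X Y : tensor R) : iszero X -> iszero Y ->
  size (tdim X) = size (tdim Y) -> (r Y <= r X)%N.
Proof.
move=> hX hY hs.
set a := tdim X; set b := tdim Y; set N := size a.
pose dk k := mkseq (fun j => if (j < k)%N then nth 0%N b j else nth 0%N a j) N.
suff H : forall k, (k <= N)%N -> forall Z, iszero Z -> tdim Z = dk k -> (r Z <= r X)%N.
  apply: (H N (leqnn N) Y hY); rewrite /dk; apply: (@eq_from_nth _ 0%N).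

    by rewrite size_mkseq /N /a hs.
  by move=> j hj; rewrite nth_mkseq /N /a hs // hj.
elim=> [|k IH] hk Z hZ hdZ.
  have -> : Z = X; last by [].
  apply: tensor_ext; last by move=> i; rewrite hZ hX.
  rewrite hdZ /dk; apply: (@eq_from_nth _ 0%N); first by rewrite size_mkseq.
  by move=> j; rewrite size_mkseq => hj; rewrite nth_mkseq.
have h : (0 < size (dk k))%N by rewrite size_mkseq (tdim_gt0 X).
pose W := mkT h (fun _ => 0 : R).
have hW : iszero W by move=> i /=; case: ifP.
apply: leq_trans (IH (ltnW hk) W hW erefl).
apply: (@zero_step W Z k (nth 0%N b k) hW hZ); first by rewrite /= size_mkseq.
rewrite hdZ /=; apply: (@eq_from_nth _ 0%N).
  by rewrite size_set_nth !size_mkseq; apply/esym/maxn_idPr.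
move=> j; rewrite size_mkseq => hj.
rewrite nth_set_nth /= !nth_mkseq //; have [->|ne] := eqVneq j k; first by rewrite ltnSn.
by rewrite ltnS leq_eqVlt (negbTE ne).
Qed.

Lemma zero_r0 (X : tensor R) : iszero X -> r X = 0%N.
Proof.
move=> hX.
have H2 : forall Y : tensor R, iszero Y -> (2 <= size (tdim Y))%N -> r Y = 0%N.
  move=> Y hY; case E: (size (tdim Y)) => [|[|n]] // _.
  have hI : iszero (idT R 0 n).
    move=> i /=; case: ifP => // /inbE [_ h].
    by move: (h 0%N isT).
  apply/eqP; rewrite -leqn0.
  case: Hr => _ [H2 _]; rewrite -(H2 0%N n).
  by apply: zero_le => //=; rewrite size_nseq.
case E: (size (tdim X)) => [|[|n]].
- by move: (tdim_gt0 X); rewrite E.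
- case: Hr => _ [_ [_ [H4 _]]]; rewrite H4; apply: H2.
    by move=> i /=; case: ifP => // _; rewrite hX.
  by rewrite /= size_rcons E.
- by apply: H2 => //; rewrite E.
Qed.

Lemma prod_first m (c : R) : (0 < m)%N ->
  \prod_(k < m) (if (k : nat) == 0%N then c else 1) = c.
Proof. by case: m => // n _; rewrite big_ord_recl /= big1 ?mulr1. Qed.

Lemma nonzero_ge1 (X : tensor R) i : inb (tdim X) i -> tval X i != 0 -> (1 <= r X)%N.
Proof.
move=> hi hc; set d := tdim X; set N := size d; set c := tval X i.
have [hsi hlt] := (inbE (tdim X) i).1 hi.
pose dk k := mkseq (fun j => if (j < k)%N then 1%N else nth 0%N d j) N.
pose ik k := mkseq (fun j => if (j < k)%N then 0%N else nth 0%N i j) N.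
have H : forall k, (k <= N)%N -> exists Z, (r Z <= r X)%N /\ tdim Z = dk k /\ tval Z (ik k) = c.
  elim=> [|k IH] hk.
    exists X; split=> //; split.
      apply: (@eq_from_nth _ 0%N); first by rewrite size_mkseq.
      by move=> j hj; rewrite nth_mkseq.
    rewrite /c; congr tval; apply: (@eq_from_nth _ 0%N); first by rewrite size_mkseq.
    by move=> j; rewrite size_mkseq => hj; rewrite nth_mkseq.
  have [Z [hZr [hZd hZv]]] := IH (ltnW hk).
  have hkZ : (k < size (tdim Z))%N by rewrite hZd size_mkseq.
  pose A := \matrix_(a < 1, t < nth 0%N (tdim Z) k) (((t : nat) == nth 0%N i k)%:R : R).
  exists (modeT (n := Ordinal hkZ) A); split.
    apply: leq_trans hZr; case: Hr => _ [_ [_ [_ [_ H6]]]]; exact: H6.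
  have hdk : set_nth 0%N (tdim Z) k 1 = dk k.+1.
    rewrite hZd; apply: (@eq_from_nth _ 0%N).
      by rewrite size_set_nth !size_mkseq; apply/maxn_idPr.
    move=> j; rewrite size_set_nth size_mkseq (maxn_idPr hk) => hj.
    rewrite nth_set_nth /= !nth_mkseq //; have [->|ne] := eqVneq j k; first by rewrite ltnSn.
    by rewrite ltnS (leq_eqVlt j k) (negbTE ne).
  split; first by rewrite /= hdk.
  rewrite /= hdk.
  have -> : inb (dk k.+1) (ik k.+1).
    apply/inbE; split; first by rewrite !size_mkseq.
    move=> j; rewrite size_mkseq => hj; rewrite !nth_mkseq //.
    by case: ifP => // _; apply: hlt; rewrite -/d -/N.
  have hik : (nth 0%N i k < nth 0%N (tdim Z) k)%N.
    by rewrite hZd nth_mkseq ?ltnn //; apply: hlt.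
  rewrite (bigD1 (Ordinal hik)) //= big1 ?addr0 => [|t ht].
    case: insubP => [u _ hu|]; last by rewrite nth_mkseq // ltnSn.
    rewrite mxE eqxx mulr1 -hZv; congr tval.
    apply: (@eq_from_nth _ 0%N); first by rewrite size_set_nth !size_mkseq; apply/maxn_idPr.
    move=> j; rewrite size_set_nth size_mkseq (maxn_idPr hk) => hj.
    rewrite nth_set_nth /= !nth_mkseq //; have [->|ne] := eqVneq j k; first by rewrite ltnn.
    by rewrite ltnS leq_eqVlt (negbTE ne).
  case: insubP => [u _ hu|]; last by rewrite mulr0.
  rewrite mxE; case: eqP => [e|]; last by rewrite mulr0.
  by case/eqP: ht; apply: val_inj.
have [Z [hZr [hZd hZv]]] := H N (leqnn N).
have hZd' : tdim Z = nseq N 1%N.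
  rewrite hZd; apply: (@eq_from_nth _ 0%N); first by rewrite size_mkseq size_nseq.
  by move=> j; rewrite size_mkseq => hj; rewrite nth_mkseq // nth_nseq hj.
have hZv' : tval Z (nseq N 0%N) = c.
  rewrite -hZv; congr tval; apply: (@eq_from_nth _ 0%N); first by rewrite size_mkseq size_nseq.
  by move=> j; rewrite size_nseq => hj; rewrite nth_mkseq // nth_nseq hj.
have hN : N = N.-1.+1 by rewrite prednK // tdim_gt0.
have R1 : rank_one Z.
  exists (fun k j => if k == 0%N then c else 1); split.
    move=> k; rewrite hZd' size_nseq => hk; exists 0%N; first by rewrite nth_nseq hk.
    by case: ifP => //; rewrite oner_eq0.
  move=> j; rewrite hZd' => /inbE [hs hj].
  have -> : j = nseq N 0%N.
    apply: (@eq_from_nth _ 0%N); first by rewrite hs !size_nseq.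
    move=> x; rewrite hs size_nseq => hx; move: (hj x); rewrite size_nseq nth_nseq hx.
    by rewrite !nth_nseq hx; move/(_ isT); rewrite ltnS leqn0 => /eqP.
  by rewrite hZv' prod_first // size_nseq hN.
case: Hr => [H1 _]; have := (H1 Z).2 R1 => <-; exact: hZr.
Qed.

End S.

Theorem proposition4p3 (R : realType) (r : tensor R -> nat) :
  is_tensor_rank_fn r -> forall X : tensor R, r X = 0%N <-> X = zeroT X.
Proof.
move=> Hr X; split; last first.
  move=> ->; apply: (zero_r0 Hr) => i /=; by case: ifP.
move=> h0; case: (classic (exists i, tval X i != 0)) => [[i hi]|hn].
  case hin: (inb (tdim X) i); last by move: hi; rewrite tval_out ?hin ?eqxx.
  by have := nonzero_ge1 Hr hin hi; rewrite h0.
apply: tensor_ext => // i /=; case: ifP => _; apply/eqP/negPn/negP => hi; apply: hn; by exists i.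
Qed.
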